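(* Let $(\mathcal{A},\mathcal{E})$ be a finite, essentially small exact category. Then $\mu_\mathcal{E}:(\mathrm{ind}\mathcal{A},\subset_\mathcal{E})\to(\mathfrak{S}(\mathbb{N}),\lll)$ is a measure, i.e. order-preserving; moreover $X\subsetneq_\mathcal{E}Y$ implies $\mu_\mathcal{E}(X)\lll\mu_\mathcal{E}(Y)$.
   Context: $(\mathcal{A},\mathcal{E})$ is a Quillen exact category; admissible monics are morphisms $i$ with $(i,d)\in\mathcal{E}$ for some $d$. $X\subset_\mathcal{E}Y$ means there is an admissible monic $X\to Y$, and $X\subsetneq_\mathcal{E}Y$ means there is one that is not an isomorphism. The $\mathcal{E}$-length $l_\mathcal{E}(X)$ is the supremum of all $n$ such that there is a chain $0=X_0\to\cdots\to X_n=X$ of admissible monics none of which is an isomorphism; $(\mathcal{A},\mathcal{E})$ is finite if $l_\mathcal{E}(X)<\infty$ for all $X$. $\mathrm{ind}\mathcal{A}$ is the set of isomorphism classes of indecomposable objects, partially ordered by $\subset_\mathcal{E}$. $\mathfrak{S}(\mathbb{N})$ is the set of finite nonempty sequences of natural numbers, totally ordered by: $x\lll y$ iff $x=y$, or $x$ is a proper prefix of $y$, or at the first index $i$ where $x_i\neq y_i$ (both defined) one has $x_i>y_i$ (lexicographic order with the order of $\mathbb{N}$ reversed). For indecomposable $X$, $\mu_\mathcal{E}(X)$ is the $\lll$-maximum of the vectors $(l_\mathcal{E}(X_1),\dots,l_\mathcal{E}(X_n))$ over all chains $X_1\subsetneq_\mathcal{E}X_2\subsetneq_\mathcal{E}\cdots\subsetneq_\mathcal{E}X_n=X$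 ($n\ge1$) with all $X_i$ indecomposable. A measure for a poset is an order-preserving map to a totally ordered set. *)

(* Defs.v *)
From HB Require Import structures.
From mathcomp Require Import all_boot all_order all_algebra.
Set Implicit Arguments. Unset Strict Implicit. Unset Printing Implicit Defensive.
Import GRing.Theory.
Local Open Scope ring_scope.

(** Preadditive categories: hom-sets are abelian groups, composition bilinear.
    Objects live in a Type (this is how "essentially small" is rendered). *)
Record PreaddCat := {
  Obj :> Type;
  Hom : Obj -> Obj -> zmodType;
  comp : forall X Y Z : Obj, Hom Y Z -> Hom X Y -> Hom X Z;
  idm : forall X : Obj, Hom X X;
  comp_assoc : forall X Y Z W (h : Hom Z W) (g : Hom Y Z) (f : Hom X Y),
      comp h (comp g f) = comp (comp h g) f;
  comp_id_l : forall X Y (f : Hom X Y), comp (idm Y) f = f;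
  comp_id_r : forall X Y (f : Hom X Y), comp f (idm X) = f;
  comp_addl : forall X Y Z (g g' : Hom Y Z) (f : Hom X Y),
      comp (g + g') f = comp g f + comp g' f;
  comp_addr : forall X Y Z (g : Hom Y Z) (f f' : Hom X Y),
      comp g (f + f') = comp g f + comp g f'
}.
Arguments Hom {p}.
Arguments comp {p X Y Z}.
Arguments idm {p}.

Section Cat.
Variable C : PreaddCat.

Definition is_zero_obj (Z : C) : Prop := idm Z = 0.

Definition is_iso (X Y : C) (f : Hom X Y) : Prop :=
  exists g : Hom Y X, comp g f = idm X /\ comp f g = idm Y.

Definition is_biproduct (X Y S : C) (i1 : Hom X S) (i2 : Hom Y S)
    (p1 : Hom S X) (p2 : Hom S Y) : Prop :=
  [/\ comp p1 i1 = idm X, comp p2 i2 = idm Y, comp p1 i2 = 0, comp p2 i1 = 0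
    & comp i1 p1 + comp i2 p2 = idm S].

Definition additive : Prop :=
  (exists Z : C, is_zero_obj Z) /\
  forall X Y : C, exists (S : C) (i1 : Hom X S) (i2 : Hom Y S)
    (p1 : Hom S X) (p2 : Hom S Y), is_biproduct i1 i2 p1 p2.

Definition is_kernel (A B D : C) (i : Hom A B) (d : Hom B D) : Prop :=
  comp d i = 0 /\
  forall (T : C) (f : Hom T B), comp d f = 0 -> exists! g : Hom T A, comp i g = f.

Definition is_cokernel (A B D : C) (d : Hom B D) (i : Hom A B) : Prop :=
  comp d i = 0 /\
  forall (T : C) (f : Hom B T), comp f i = 0 -> exists! g : Hom D T, comp g d = f.

Definition is_kcpair (A B D : C) (i : Hom A B) (d : Hom B D) : Prop :=
  is_kernel i d /\ is_cokernel d i.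

Definition is_pushout (A B A' B' : C) (i : Hom A B) (f : Hom A A')
    (i' : Hom A' B') (f' : Hom B B') : Prop :=
  comp i' f = comp f' i /\
  forall (T : C) (u : Hom A' T) (v : Hom B T), comp u f = comp v i ->
    exists! w : Hom B' T, comp w i' = u /\ comp w f' = v.

Definition is_pullback (B D D' B' : C) (d : Hom B D) (g : Hom D' D)
    (d' : Hom B' D') (g' : Hom B' B) : Prop :=
  comp d g' = comp g d' /\
  forall (T : C) (u : Hom T D') (v : Hom T B), comp g u = comp d v ->
    exists! w : Hom T B', comp d' w = u /\ comp g' w = v.

End Cat.

Definition pair_class (C : PreaddCat) :=
  forall A B D : C, Hom A B -> Hom B D -> Prop.

Definition adm_monic (C : PreaddCat) (E : pair_class C) (A B : C) (i : Hom A B) :=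
  exists (D : C) (d : Hom B D), E A B D i d.
Definition adm_epic (C : PreaddCat) (E : pair_class C) (B D : C) (d : Hom B D) :=
  exists (A : C) (i : Hom A B), E A B D i d.

(** Quillen exact structure (Buehler's axioms E0-E2, E0op-E2op). *)
Definition is_exact_structure (C : PreaddCat) (E : pair_class C) : Prop :=
      (forall A B D (i : Hom A B) (d : Hom B D), E A B D i d -> is_kcpair i d) /\
      (forall A B D A' B' D' (i : Hom A B) (d : Hom B D) (i' : Hom A' B')
         (d' : Hom B' D') (a : Hom A A') (b : Hom B B') (c : Hom D D'),
         E A B D i d -> is_iso a -> is_iso b -> is_iso c ->
         comp i' a = comp b i -> comp d' b = comp c d -> E A' B' D' i' d') /\
      (forall A : C, adm_monic E (idm A) /\ adm_epic E (idm A)) /\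
      (forall A B D (f : Hom A B) (g : Hom B D),
         (adm_monic E f -> adm_monic E g -> adm_monic E (comp g f)) /\
         (adm_epic E f -> adm_epic E g -> adm_epic E (comp g f))) /\
      (forall A B A' (i : Hom A B) (f : Hom A A'), adm_monic E i ->
         exists (B' : C) (i' : Hom A' B') (f' : Hom B B'),
           is_pushout i f i' f' /\ adm_monic E i') /\
      (forall B D D' (d : Hom B D) (g : Hom D' D), adm_epic E d ->
         exists (B' : C) (d' : Hom B' D') (g' : Hom B' B),
           is_pullback d g d' g' /\ adm_epic E d').

Record ExactCat := {
  ecat :> PreaddCat;
  ecat_additive : additive ecat;
  Ex : pair_class ecat;
  Ex_exact : is_exact_structure Ex
}.

Section Exact.
Variable C : ExactCat.

Definition subE (X Y : C) : Prop := exists i : Hom X Y, adm_monic (@Ex C) i.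
Definition psubE (X Y : C) : Prop :=
  exists i : Hom X Y, adm_monic (@Ex C) i /\ ~ is_iso i.

Definition chain_length (X : C) (n : nat) : Prop :=
  exists Xs : nat -> C,
    [/\ is_zero_obj (Xs 0%N), Xs n = X &
        forall k, (k < n)%N -> psubE (Xs k) (Xs k.+1)].

(** l_E(X) = l : l is the supremum (attained, being a bounded set of naturals
    containing 0-length chains) of the lengths of such chains *)
Definition is_lengthE (X : C) (l : nat) : Prop :=
  chain_length X l /\ forall n, chain_length X n -> (n <= l)%N.

(** (A,E) is finite: l_E(X) < oo for every X *)
Definition finite_exact : Prop :=
  forall X : C, exists N : nat, forall n, chain_length X n -> (n <= N)%N.

Definition indecomposable (X : C) : Prop :=
  ~ is_zero_obj X /\
  forall (Y1 Y2 : C) (i1 : Hom Y1 X) (i2 : Hom Y2 X) (p1 : Hom X Y1)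
    (p2 : Hom X Y2), is_biproduct i1 i2 p1 p2 -> is_zero_obj Y1 \/ is_zero_obj Y2.

(** v = (l_E(X_1), ..., l_E(X_n)) for a chain X_1 <_E ... <_E X_n = X of
    indecomposables, n >= 1 (X_k is Xs k, 1-indexed). *)
Definition mu_candidate (X : C) (v : seq nat) : Prop :=
  exists (n : nat) (Xs : nat -> C),
    [/\ (1 <= n)%N, Xs n = X, size v = n &
        forall k, (1 <= k <= n)%N ->
          [/\ indecomposable (Xs k),
               (k < n)%N -> psubE (Xs k) (Xs k.+1) &
               is_lengthE (Xs k) (nth 0%N v k.-1)]].

End Exact.

Definition lll (x y : seq nat) : Prop :=
  x = y \/
  (exists s : seq nat, s <> [::] /\ y = x ++ s) \/
  (exists i : nat, [/\ (i < size x)%N, (i < size y)%N, take i x = take i y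
                      & (nth 0%N y i < nth 0%N x i)%N]).

Definition is_muE (C : ExactCat) (X : C) (v : seq nat) : Prop :=
  mu_candidate X v /\ forall w, mu_candidate X w -> lll w v.

(* Main.v *)
Require Import Defs.
From mathcomp Require Import all_boot all_order all_algebra zify.
From Stdlib Require Import Classical.
Set Implicit Arguments. Unset Strict Implicit. Unset Printing Implicit Defensive.
Import GRing.Theory.

Fixpoint lleb (x y : seq nat) : bool :=
  match x, y with
  | [::], _ => true
  | _ :: _, [::] => false
  | a :: x', b :: y' => (b < a) || ((a == b) && lleb x' y')
  end.

Lemma lleb_refl x : lleb x x.
Proof. by elim: x => //= a x ->; rewrite eqxx orbT. Qed.

Lemma lleb_trans x y z : lleb x y -> lleb y z -> lleb x z.
Proof.
elim: x y z => [|a x IH] [|b y] [|c z] //=.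
case/orP=> [ba|/andP[/eqP ab xy]]; case/orP=> [cb|/andP[/eqP bc yz]].
- by rewrite (ltn_trans cb ba).
- by rewrite -bc ba.
- by rewrite ab cb.
- by rewrite ab bc eqxx (IH _ _ xy yz) andbT orbT.
Qed.

Lemma lleb_total x y : lleb x y || lleb y x.
Proof.
elim: x y => [|a x IH] [|b y] //=.
case: (ltngtP a b) => [ab|ab|ab] //=.
Qed.

Lemma lleb_cat x s : lleb x (x ++ s).
Proof. by elim: x => //= a x ->; rewrite eqxx orbT. Qed.

Lemma lleb_cat_inv x s : lleb (x ++ s) x -> s = [::].
Proof. by elim: x => [|a x IH] /=; [case: s | rewrite ltnn eqxx /=]. Qed.

Lemma lll_lleb x y : lll x y -> lleb x y.
Proof.
case=> [->|[[s [_ ->]]|[i [ix iy tk lt]]]]; first exact: lleb_refl.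
  exact: lleb_cat.
elim: x y i ix iy tk lt => [|a x IH] [|b y] [|i] //=.
- by move=> _ _ _ ->.
- move=> ix iy [ab tk] lt. by rewrite ab eqxx (IH y i ix iy tk lt) andbT orbT.
Qed.

Lemma lleb_lll x y : lleb x y -> lll x y.
Proof.
elim: x y => [|a x IH] [|b y] //=.
- by move=> _; left.
- by move=> _; right; left; exists (b :: y); split.
- case/orP=> [ba|/andP[/eqP <- /IH]].
  + by right; right; exists 0%N; split.
  + case=> [->|[[s [s0 ->]]|[i [ix iy tk lt]]]].
    * by left.
    * by right; left; exists s.
    * by right; right; exists i.+1; split => //=; rewrite tk.
Qed.

Lemma max_exists (S : seq (seq nat)) : forall (P : seq nat -> Prop),
  (exists w, P w) -> (forall w, P w -> w \in S) ->
  exists v, P v /\ forall w, P w -> lleb w v.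
Proof.
elim: S => [|a S IH] P [w0 Pw0] HS.
  by have := HS _ Pw0; rewrite in_nil.
case: (classic (exists w, P w /\ w <> a)) => [ex|nex].
- have HS' : forall w, P w /\ w <> a -> w \in S.
    move=> w [Pw wa]; have := HS _ Pw; rewrite in_cons => /orP[/eqP E|//].
    by case: (wa E).
  have [v [[Pv va] Hv]] := IH (fun w => P w /\ w <> a) ex HS'.
  case: (classic (P a)) => [Pa|nPa].
  + case/orP: (lleb_total a v) => [av|va'].
    * exists v; split => // w Pw. case: (classic (w = a)) => [->//|wa].
      exact: Hv.
    * exists a; split => // w Pw. case: (classic (w = a)) => [->|wa].
        exact: lleb_refl.
      exact: lleb_trans (Hv w (conj Pw wa)) va'.
  + exists v; split => // w Pw; apply: Hv; split => // E; apply: nPa.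
    by rewrite -E.
- have Pa : P a.
    apply: NNPP => nPa; apply: nex; exists w0; split => // E; apply: nPa.
    by rewrite -E.
  exists a; split => // w Pw.
  have -> : w = a by apply: NNPP => wa; apply: nex; exists w.
  exact: lleb_refl.
Qed.

Fixpoint seqs_upto (N B : nat) : seq (seq nat) :=
  if N is N'.+1 then [::] :: [seq x :: s | x <- iota 0 B, s <- seqs_upto N' B]
  else [:: [::]].

Lemma seqs_uptoP N B v : size v <= N -> all (fun x => x < B) v -> v \in seqs_upto N B.
Proof.
elim: N v => [|N IH] [|x v] //= sz /andP[xB vB].
rewrite in_cons; apply/orP; right.
apply: (allpairs_f (fun x s => x :: s)); first by rewrite mem_iota.
exact: IH.
Qed.

Lemma chain_bound n (f : nat -> nat) :
  (forall k, 1 <= k -> k < n -> f k < f k.+1) ->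
  forall k, 1 <= k <= n -> f k + (n - k) <= f n.
Proof.
move=> H d; elim: (n - d) {-2}d (erefl (n - d)) => [|e IH] k ek /andP[k1 kn].
  have -> : k = n by lia.
  by rewrite subnn addn0.
have h1 := H k k1 (ltac:(lia)).
have h2 := IH k.+1 (ltac:(lia)) (ltac:(apply/andP; lia)).
lia.
Qed.

Local Notation Hom := Defs.Hom.
Local Notation comp := Defs.comp.
Section CatL.
Variable C : ExactCat.

Lemma comp0l (X Y Z : C) (f : Hom X Y) : comp (0%R : Hom Y Z) f = 0%R.
Proof.
have H := comp_addl (0%R : Hom Y Z) 0%R f. rewrite addr0 in H.
by move: (congr1 (fun t => (t - comp (0%R : Hom Y Z) f)%R) H); rewrite addrK subrr => <-.
Qed.

Lemma comp0r (X Y Z : C) (g : Hom Y Z) : comp g (0%R : Hom X Y) = 0%R.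
Proof.
have H := comp_addr g (0%R : Hom X Y) 0%R. rewrite addr0 in H.
by move: (congr1 (fun t => (t - comp g (0%R : Hom X Y))%R) H); rewrite addrK subrr => <-.
Qed.

Lemma zero_from (X Y : C) (f : Hom X Y) : is_zero_obj X -> f = 0%R.
Proof. by move=> z; rewrite -(comp_id_r f) z comp0r. Qed.

Lemma zero_iso (X Y : C) (f : Hom X Y) : is_zero_obj X -> is_iso f -> is_zero_obj Y.
Proof.
move=> z [g [_ fg]]; rewrite /is_zero_obj -fg (zero_from f z); exact: comp0l.
Qed.

Lemma iso_adm (X Y : C) (f : Hom X Y) : is_iso f -> adm_monic (@Ex C) f.
Proof.
move=> [g [gf fg]].
have [_ [Hiso [HE0 _]]] := Ex_exact C.
have [[D [d Ed]] _] := HE0 X.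
exists D, (comp d g).
apply: (Hiso _ _ _ _ _ _ _ _ _ _ (idm X) f (idm D) Ed).
- by exists (idm X); rewrite !comp_id_l.
- by exists g.
- by exists (idm D); rewrite !comp_id_l.
- by [].
- by rewrite -comp_assoc gf comp_id_r comp_id_l.
Qed.

Lemma noniso_comp (A X Y : C) (j : Hom A X) (f : Hom X Y) :
  is_iso f -> ~ is_iso j -> ~ is_iso (comp f j).
Proof.
move=> [g [gf fg]] nj [h [h1 h2]]; apply: nj; exists (comp h f); split.
  by rewrite -comp_assoc h1.
have : comp g (comp (comp (comp f j) h) f) = comp g f by rewrite h2 comp_id_l.
by rewrite !comp_assoc gf comp_id_l -!comp_assoc => ->.
Qed.

Lemma psubE_iso (A X Y : C) (f : Hom X Y) : psubE A X -> is_iso f -> psubE A Y.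
Proof.
move=> [j [aj nj]] fi; exists (comp f j); split; last exact: noniso_comp.
have [_ [_ [_ [HE1 _]]]] := Ex_exact C.
by apply: (proj1 (HE1 _ _ _ j f)) => //; apply: iso_adm.
Qed.

Lemma chain_iso (X Y : C) (f : Hom X Y) n : chain_length X n -> is_iso f -> chain_length Y n.
Proof.
move=> [Xs [z0 Xn Hs]] fi.
exists (fun k => if k == n then Y else Xs k); split.
- case: eqP => [e|_] //; subst n; apply: zero_iso fi; by rewrite -Xn.
- by rewrite eqxx.
- move=> k kn; rewrite (_ : (k == n) = false); last by apply/eqP; lia.
  have h := Hs k kn.
  case: eqP => [e|_] //. rewrite e Xn in h. exact: psubE_iso h fi.
Qed.

Lemma iso_sym (X Y : C) (f : Hom X Y) : is_iso f -> exists g : Hom Y X, is_iso g.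
Proof. by move=> [g [gf fg]]; exists g, f. Qed.

Lemma length_iso (X Y : C) (f : Hom X Y) l : is_lengthE X l -> is_iso f -> is_lengthE Y l.
Proof.
move=> [cl Hl] fi; split; first exact: chain_iso cl fi.
have [g gi] := iso_sym fi.
by move=> n cn; apply: Hl; apply: chain_iso cn gi.
Qed.

Lemma length_uniq (X : C) a b : is_lengthE X a -> is_lengthE X b -> a = b.
Proof. by move=> [ca Ha] [cb Hb]; apply/eqP; rewrite eqn_leq Ha // Hb. Qed.

Lemma zero_monic (X : C) : exists (Z : C) (i : Hom Z X), is_zero_obj Z /\ adm_monic (@Ex C) i.
Proof.
have [Hkc [_ [HE0 _]]] := Ex_exact C.
have [_ [A0 [i Ei]]] := HE0 X.
have [[ki Hk] _] := Hkc _ _ _ _ _ Ei.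
have i0 : i = 0%R by rewrite -[i](comp_id_l) ki.
exists A0, i; split; last by exists X, (idm X).
have [g [_ gu]] := Hk A0 i ki.
have e1 := gu (idm A0) (comp_id_r i).
have e2 := gu 0%R (ltac:(by rewrite i0 comp0l)).
by rewrite /is_zero_obj -e1 e2.
Qed.

Lemma some_chain (X : C) : exists n, chain_length X n.
Proof.
case: (classic (is_zero_obj X)) => [z|nz].
  by exists 0%N, (fun _ => X); split.
have [Z [i [z ai]]] := zero_monic X.
exists 1%N, (fun k => if k == 0%N then Z else X); split => //.
move=> k; rewrite ltnS leqn0 => /eqP -> /=; exists i; split => // ii.
by apply: nz; apply: zero_iso z ii.
Qed.

Lemma max_nat (P : nat -> Prop) N : forall m, P m -> (forall n, P n -> n <= N) ->
  exists l, P l /\ forall n, P n -> n <= l.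
Proof.
move=> m Pm HN; suff: forall d k, N - k <= d -> P k -> exists l, P l /\ forall n, P n -> n <= l.
  by move=> /(_ (N - m) m (leqnn _) Pm).
elim=> [|d IH] k dk Pk.
  exists k; split => // n Pn; have := HN _ Pn; lia.
case: (classic (exists n, P n /\ k < n)) => [[n [Pn kn]]|nex].
  by apply: (IH n) => //; lia.
exists k; split => // n Pn; rewrite leqNgt; apply/negP => kn; apply: nex; by exists n.
Qed.

Lemma exists_length (X : C) : finite_exact C -> exists l, is_lengthE X l.
Proof.
move=> Hfin; have [N HN] := Hfin X; have [m cm] := some_chain X.
exact: max_nat cm HN.
Qed.

Lemma chain_ext (A B : C) a b : is_lengthE A a -> psubE A B -> is_lengthE B b -> a < b.
Proof.
move=> [[Xs [z0 Xa Hs]] _] AB [_ Hb]; apply: Hb.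
exists (fun k => if k == a.+1 then B else Xs k); split.
- by [].
- by rewrite eqxx.
- move=> k; rewrite ltnS leq_eqVlt => /orP[/eqP ->|ka].
    by rewrite eqxx (_ : (a == a.+1) = false) ?Xa //; lia.
  rewrite (_ : (k == a.+1) = false); last by lia.
  rewrite (_ : (k.+1 == a.+1) = false); last by lia.
  exact: Hs.
Qed.

End CatL.

Lemma cand_bound (C : ExactCat) (X : C) v L :
  is_lengthE X L -> mu_candidate X v -> v \in seqs_upto L.+1 L.+1.
Proof.
move=> XL [n [Xs [n1 Xn sz H]]].
pose f k := nth 0%N v k.-1.
have step : forall k, 1 <= k -> k < n -> f k < f k.+1.
  move=> k k1 kn.
  have [_ ps lk] := H k (ltac:(apply/andP; lia)).
  have [_ _ lk1] := H k.+1 (ltac:(apply/andP; lia)).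
  exact: chain_ext lk (ps kn) lk1.
have fn : f n = L.
  have [_ _ ln] := H n (ltac:(apply/andP; lia)).
  rewrite Xn in ln; exact: length_uniq ln XL.
have cb := chain_bound step.
apply: seqs_uptoP.
  have := cb 1%N (ltac:(apply/andP; lia)); lia.
apply/(all_nthP 0%N) => i isz.
have := cb i.+1 (ltac:(apply/andP; lia)); rewrite /f /=; move: fn; rewrite /f /= => fn; lia.
Qed.

Theorem lemma7p4 (C : ExactCat) (Hfin : finite_exact C) :
  (* mu_E is well defined on indecomposables *)
  (forall X : C, indecomposable X -> exists v, is_muE X v) /\
  (forall (X Y : C) (vX vY : seq nat),
     indecomposable X -> indecomposable Y -> is_muE X vX -> is_muE Y vY ->
     (* order-preserving *)
     (subE X Y -> lll vX vY) /\
     (* strictly increasing along proper admissible inclusions *)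
     (psubE X Y -> lll vX vY /\ vX <> vY)).
Proof.
have Hex : forall X : C, indecomposable X -> exists v, is_muE X v.
  move=> X iX; have [L XL] := exists_length X Hfin.
  have c0 : mu_candidate X [:: L].
    exists 1%N, (fun _ => X); split => // k /andP[k1 k2].
    have -> : k = 1%N by lia.
    by split.
  have [v [cv Hv]] := max_exists (S := seqs_upto L.+1 L.+1)
     (ex_intro _ _ c0) (fun w cw => cand_bound XL cw).
  by exists v; split => // w cw; apply: lleb_lll; apply: Hv.
have Hps : forall (X Y : C) (vX vY : seq nat),
     indecomposable Y -> is_muE X vX -> is_muE Y vY ->
     psubE X Y -> lll vX vY /\ vX <> vY.
  move=> X Y vX vY iY [[n [Xs [n1 Xn sz H]]] _] [_ HY] XY.
  have [LY YL] := exists_length Y Hfin.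
  have cY : mu_candidate Y (vX ++ [:: LY]).
    exists n.+1, (fun k => if k == n.+1 then Y else Xs k); split => //.
    - by rewrite eqxx.
    - by rewrite size_cat sz addn1.
    move=> k /andP[k1 kn]; case: eqP => [->|ne].
      split => //; first by rewrite ltnn.
      by rewrite /= nth_cat sz ltnn subnn.
    have kn' : k <= n by lia.
    have [i1 i2 i3] := H k (ltac:(apply/andP; lia)).
    split => //.
    + move=> _; case: eqP => [e|ne2].
        have -> : k = n by lia.
        by rewrite Xn.
      by apply: i2; lia.
    + rewrite nth_cat sz (_ : k.-1 < n) //; lia.
  have l1 := HY _ cY.
  split.
    apply: lleb_lll; apply: lleb_trans (lleb_cat vX [:: LY]) (lll_lleb l1).
  move=> E; rewrite -E in l1.
  by have := lleb_cat_inv (lll_lleb l1).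
split => // X Y vX vY iX iY mX mY; split; last exact: Hps.
move=> [i ai].
case: (classic (is_iso i)) => [ii|ni]; last first.
  by case: (Hps X Y vX vY iY mX mY) => //; exists i.
have [[n [Xs [n1 Xn sz H]]] _] := mX; apply: (proj2 mY).
exists n, (fun k => if k == n then Y else Xs k); split => //.
- by rewrite eqxx.
move=> k /andP[k1 kn]; case: eqP => [e|ne].
  subst k; have [_ _ i3] := H n (ltac:(apply/andP; lia)).
  split => //; first by rewrite ltnn.
  rewrite Xn in i3; exact: length_iso i3 ii.
have [i1 i2 i3] := H k (ltac:(apply/andP; lia)).
split => // kn'; case: eqP => [e|_]; last exact: i2.
have := i2 kn'; rewrite e Xn => h; exact: psubE_iso h ii.
Qed.
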